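(* Let $T\ge 1$ and $n_w\ge 0$ be integers, let $C>0$, and let $q_1,\dots,q_T\in\mathbb{R}$. For $\mathbf{u}=(u_1,\dots,u_T)\in\mathbb{R}^T$ and $i=1,\dots,T$ write $\mathbf{u}_i=(u_{i-n_w},\dots,u_i)$, where entries with index $\le 0$ are fixed constants (not decision variables). Let $J_i:\mathbb{R}\to\mathbb{R}$ ($i=1,\dots,T$) be continuously differentiable and increasing, and let $f_i:\mathbb{R}^{n_w+1}\to\mathbb{R}$ ($i=1,\dots,T$) be continuously differentiable and non-decreasing in each of their arguments. Define the penalty function $$\hat J(\mathbf{u})=\sum_{i=1}^T\Big(J_i(u_i)+C\big(f_i(\mathbf{u}_i)-q_i\big)^2\Big),$$ and, for guardrail variables $\epsilon_1,\dots,\epsilon_T\ge 0$, the modified penalty function $$\hat J'(\mathbf{u})=\sum_{i=1}^T\Big(J_i(u_i)+C\big(f_i(\mathbf{u}_i)-q_i-\epsilon_i\big)^2\Big).$$ Let $\mathbf{u}^*$ be any (unconstrained, local) minimum of $\hat J$ on $\mathbb{R}^T$. Then the first step of gradient descent on $\hat J'$ started at $\mathbf{u}^*$ does not decrease any coordinate: for every step size $\alpha>0$ and every $j=1,\dots,T$, the $j$-th coordinate of $\mathbf{u}^*-\alpha\nabla\hat J'(\mathbf{u}^* )$ is at least $u^*_j$ (equivalently, $\nabla \hat J'(\mathbf{u}^* )\le \mathbf{0}$ componentwise).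
   Context: ''Increasing'' for a differentiable function means its derivative is strictly positive; ''non-decreasing'' means all its partial derivatives are non-negative. $\hat J'$ is obtained from $\hat J$ by replacing each right-hand side $q_i$ by $q_i+\epsilon_i$. *)

(* Defs.v *)
From HB Require Import structures.
From mathcomp Require Import all_boot all_order all_algebra.
From mathcomp Require Import all_classical all_reals all_analysis.
Set Implicit Arguments. Unset Strict Implicit. Unset Printing Implicit Defensive.
Import Order.TTheory GRing.Theory Num.Theory.
Import numFieldNormedType.Exports.
Local Open Scope ring_scope.

(* Entry m (0-based) of a row vector, or 0 if out of range (never used out of range). *)
Definition ventry (R : realType) (T : nat) (u : 'rV[R]_T) (m : nat) : R :=
  match @insub nat (fun k => k < T)%N 'I_T m with Some j => u 0 j | None => 0 end.

(* Paper index i (1-based) corresponds to the ordinal i-1.  For 0-based i, the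
   window u_i = (u_{i-n_w}, ..., u_i) (paper indices (i+1)-n_w, ..., i+1);
   its k-th entry (k = 0..n_w) has paper index (i+1) - n_w + k.  Entries with
   paper index <= 0 are the fixed constants c (indexed by their paper index). *)
Definition window (R : realType) (T nw : nat) (c : int -> R) (u : 'rV[R]_T)
    (i : 'I_T) : 'rV[R]_(nw.+1) :=
  \row_(k < nw.+1)
    (if (nw <= i + k)%N then ventry u (i + k - nw)%N
     else c ((i + k)%:Z + 1 - nw%:Z)).

Definition Jhat (R : realType) (T nw : nat) (c : int -> R) (J : 'I_T -> R -> R)
    (f : 'I_T -> 'rV[R]_(nw.+1) -> R) (C : R) (q : 'I_T -> R) (u : 'rV[R]_T) : R :=
  \sum_(i < T) (J i (u 0 i) + C * (f i (@window R T nw c u i) - q i) ^+ 2).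

Definition grad (R : realType) (T : nat) (F : 'rV[R]_T -> R) (u : 'rV[R]_T)
    : 'rV[R]_T :=
  \row_(j < T) ('D_(delta_mx 0 j) F u).

(* Main.v *)
Require Import Defs.
From HB Require Import structures.
From mathcomp Require Import all_boot all_order all_algebra.
From mathcomp Require Import all_classical all_reals all_analysis.
From mathcomp Require Import ring lra.
Import Order.TTheory GRing.Theory Num.Theory.
Import numFieldNormedType.Exports.
Local Open Scope ring_scope.
Local Open Scope classical_set_scope.

Section H.
Variable R : realType.

Lemma derive1P_eq (V W : normedModType R) (F : V -> W) x v :
  'D_v F x = 'D_1 (fun h : R => F (h *: v + x)) 0.
Proof.
rewrite /derive; set g1 := fun h => h^-1 *: _; set g2 := fun h => h^-1 *: _.
suff -> : g1 = g2 by [].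
by rewrite funeqE /g1 /g2 => h /=; rewrite addr0 scale0r add0r [_%:A]mulr1.
Qed.

Lemma affine_der (V W : normedModType R) (F : V -> W) (v x : V) (t : R) :
  derivable F (t *: v + x) v -> derivable (fun h : R => F (h *: v + x)) t 1.
Proof.
move=> d; apply/derivable1P.
have -> : (fun h : R => F ((h%:A + t) *: v + x)) = (fun h => F (h *: v + (t *: v + x))).
  by apply/funext => h; rewrite [_%:A]mulr1 scalerDl addrA.
exact: (proj1 (derivable1P F (t *: v + x) v) d).
Qed.

Lemma ventryD T (h : R) (v u : 'rV[R]_T) m :
  ventry (h *: v + u) m = h * ventry v m + ventry u m.
Proof. by rewrite /ventry; case: insubP => [k _ _|_]; rewrite ?mxE ?mulr0 ?addr0. Qed.

Definition Lw T nw (v : 'rV[R]_T) (i : 'I_T) : 'rV[R]_(nw.+1) :=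
  \row_(k < nw.+1) (if (nw <= i + k)%N then ventry v (i + k - nw)%N else 0).
Arguments Lw {T} nw v i.

Lemma windowD T nw (c : int -> R) (h : R) (v u : 'rV[R]_T) (i : 'I_T) :
  @window R T nw c (h *: v + u) i = h *: Lw nw v i + @window R T nw c u i.
Proof.
apply/rowP => k; rewrite !mxE; case: ifP => _; first by rewrite ventryD.
by rewrite mulr0 add0r.
Qed.

Lemma Lw_ge0 T nw (j : 'I_T) i k : 0 <= (Lw nw (delta_mx 0 j) i) 0 k.
Proof.
rewrite mxE; case: ifP => // _; rewrite /ventry; case: insubP => // *.
by rewrite mxE ler0n.
Qed.

Lemma sq_shift (C a b x y : R) : a + C * (b - (x + y)) ^+ 2 =
  a + C * (b - x) ^+ 2 + (- (2 * C * y) * b + C * (2 * y * x + y ^+ 2)).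
Proof. ring. Qed.

End H.
Arguments Lw {R T} nw v i.

Theorem proposition3 (R : realType) (T nw : nat) (C : R) (c : int -> R)
    (q eps : 'I_T -> R) (J : 'I_T -> R -> R) (f : 'I_T -> 'rV[R]_(nw.+1) -> R)
    (ustar : 'rV[R]_T) :
  (1 <= T)%N -> 0 < C ->
  (forall i x, derivable (J i) x 1) ->
  (forall i, continuous (derive1 (J i))) ->
  (forall i x, 0 < (derive1 (J i)) x) ->
  (forall i x, differentiable (f i) x) ->
  (forall i k, continuous (fun x => 'D_(delta_mx 0 k) (f i) x)) ->
  (forall i k x, 0 <= 'D_(delta_mx 0 k) (f i) x) ->
  (forall i, 0 <= eps i) ->
  (\forall v \near ustar, Jhat c J f C q ustar <= Jhat c J f C q v) ->
  forall (alpha : R), 0 < alpha -> forall j : 'I_T,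
    ustar 0 j <=
      (ustar - alpha *: grad (Jhat c J f C (fun i => q i + eps i)) ustar) 0 j.
Proof.
move=> T1 C0 dJ _ _ df _ dfpos eps0 hmin alpha a0 j.
set e : 'rV[R]_T := delta_mx 0 j.
pose w i := @window R T nw c ustar i.
pose A i (h : R) := J i (h *: e 0 i + ustar 0 i).
pose B i (h : R) := f i (h *: Lw nw e i + w i).
have PhiE : forall Q, (fun h : R => Jhat c J f C Q (h *: e + ustar)) =
    \sum_(i < T) (fun h => A i h + C * (B i h - Q i) ^+ 2).
  move=> Q; rewrite fct_sumE; apply/funext => h; rewrite /Jhat; apply: eq_bigr => i _.
  rewrite windowD; have -> : (h *: e + ustar) 0 i = h *: e 0 i + ustar 0 i by rewrite !mxE.
  by [].
have dA : forall i t, derivable (A i) t 1.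
  move=> i t; apply: affine_der; apply: diff_derivable; apply/derivable1_diffP; exact: dJ.
have dB : forall i t, derivable (B i) t 1.
  move=> i t; apply: affine_der; apply: diff_derivable; exact: df.
have dPhi : forall Q t, derivable (\sum_(i < T) (fun h => A i h + C * (B i h - Q i) ^+ 2)) t 1.
  move=> Q t; apply: derivable_sum => i.
  have -> : (fun h => A i h + C * (B i h - Q i) ^+ 2) = A i + (cst C) * ((B i - cst (Q i)) ^+ 2).
    by apply/funext => h /=.
  apply: derivableD => //; apply: derivableM; first exact: derivable_cst.
  by apply: derivableX; apply: derivableB => //; exact: derivable_cst.
pose Phi Q := fun h : R => Jhat c J f C Q (h *: e + ustar).
have hc : ((fun h : R => h *: e + ustar) @ 0) --> ustar.
  have : {for 0, continuous ((fun h : R => h *: e) + cst ustar)}.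
    by apply: continuousD; [exact: scalel_continuous | exact: cst_continuous].
  move=> H; have E : ustar = (( *:%R^~ e + cst ustar) 0) by rewrite addrfctE /= scale0r add0r.
  by rewrite [X in _ --> X]E.
have near0 : \forall h \near (0:R), Phi q 0 <= Phi q h.
  have := hc _ hmin; rewrite /Phi scale0r add0r; exact.
move/nbhs_ballP: near0 => [r /= r0 hr].
have fermat : is_derive (0:R) (1:R) (Phi q) 0.
  apply: (@derive1_at_min _ _ (- r) r).
  - by rewrite ge0_cp // ltW.
  - by move=> t _; rewrite /Phi PhiE; exact: dPhi.
  - by rewrite in_itv /= oppr_lt0 r0.
  - move=> t; rewrite in_itv /= => /andP[t1 t2]; apply: hr.
    by rewrite /ball /= sub0r normrN; apply/ltr_normlP; split => //; rewrite ltrNl.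
pose G := \sum_(i < T) (fun h : R => (- (2 * C * eps i)) * B i h + C * (2 * eps i * q i + eps i ^+ 2)).
have PsiE : Phi (fun i => q i + eps i) = Phi q + G.
  rewrite /Phi !PhiE /G -!big_split; apply: eq_bigr => i _; apply/funext => h /=.
  by rewrite addrfctE /= sq_shift.
have dGi : forall i, derivable (fun h : R => (- (2 * C * eps i)) * B i h + C * (2 * eps i * q i + eps i ^+ 2)) 0 1.
  move=> i; have -> : (fun h : R => (- (2 * C * eps i)) * B i h + C * (2 * eps i * q i + eps i ^+ 2)) =
    cst (- (2 * C * eps i)) * B i + cst (C * (2 * eps i * q i + eps i ^+ 2)) by apply/funext => h /=.
  apply: derivableD; last exact: derivable_cst.
  apply: derivableM; [exact: derivable_cst | exact: dB].
have dBpos : forall i, 0 <= 'D_1 (B i) 0.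
  move=> i; have -> : 'D_1 (B i) 0 = 'D_(Lw nw e i) (f i) (w i) by rewrite [RHS]derive1P_eq.
  rewrite deriveE // {1}(row_sum_delta (Lw nw e i)) linear_sum; apply: sumr_ge0 => k _.
  rewrite linearZ /= -deriveE //; apply: mulr_ge0; [exact: Lw_ge0 | exact: dfpos].
have hD : 'D_e (Jhat c J f C (fun i => q i + eps i)) ustar <= 0.
  rewrite derive1P_eq -/(Phi (fun i => q i + eps i)) PsiE deriveD; last 2 first.
  - by rewrite /Phi PhiE; exact: dPhi.
  - by rewrite /G; apply: derivable_sum.
  have F0 : 'D_(1:R) (Phi q) (0:R) = 0 by case: fermat.
  rewrite F0 add0r /G derive_sum //; apply: sumr_le0 => i _.
  have -> : (fun h : R => (- (2 * C * eps i)) * B i h + C * (2 * eps i * q i + eps i ^+ 2)) =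
    cst (- (2 * C * eps i)) * B i + cst (C * (2 * eps i * q i + eps i ^+ 2)) by apply/funext => h /=.
  rewrite deriveD; last exact: derivable_cst; last first.
    apply: derivableM; [exact: derivable_cst | exact: dB].
  rewrite deriveM; [|exact: derivable_cst | exact: dB].
  rewrite !derive_cst /= scaler0 !addr0.
  apply: mulr_le0_ge0; last exact: dBpos.
  by rewrite oppr_le0; apply: mulr_ge0 => //; apply: mulr_ge0 => //; apply: ltW.
rewrite !mxE.
have := mulr_ge0_le0 (ltW a0) hD.
lra.
Qed.
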